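(* If $r \in \mathbb{Q}_{>1} \setminus \mathbb{N}$, then the set of elasticities $R(S_r)$ is dense in $\mathbb{R}_{\ge 1}$.
   Context: $S_r$ is the additive submonoid of $(\mathbb{Q}_{\ge 0},+)$ generated by $\{r^n : n \in \mathbb{N}_0\}$; for $r \in \mathbb{Q}_{>1}\setminus\mathbb{N}$ it is atomic with atoms $r^n$, $n \in \mathbb{N}_0$. $\mathsf{L}(x)$ denotes the set of lengths of factorizations of $x$ into atoms. The elasticity of $x \ne 0$ is $\rho(x) = \sup \mathsf{L}(x)/\inf \mathsf{L}(x)$, $\rho(0)=1$, and $R(S_r) = \{\rho(x) : x \in S_r\}$. *)

(* Defs.v *)
From Stdlib Require Import Reals List.
Import ListNotations.
Open Scope R_scope.

(* A factorization of an element of S_r is a finite multiset of atoms r^k,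
   represented by the list of exponents k.  Its value and its length: *)
Definition fact_value (r : R) (l : list nat) : R :=
  fold_right (fun k acc => r ^ k + acc) 0 l.

Definition in_Sr (r x : R) : Prop := exists l : list nat, fact_value r l = x.

Definition lengths (r x : R) (t : R) : Prop :=
  exists l : list nat, fact_value r l = x /\ t = INR (length l).

Definition is_glb (E : R -> Prop) (s : R) : Prop :=
  (forall y, E y -> s <= y) /\ (forall b, (forall y, E y -> b <= y) -> b <= s).

Definition elasticity_of (r x rho : R) : Prop :=
  (x = 0 /\ rho = 1) \/
  (x <> 0 /\ exists s i : R, is_lub (lengths r x) s /\ is_glb (lengths r x) i
                            /\ rho = s / i).

Definition elasticity_set (r rho : R) : Prop :=
  exists x : R, in_Sr r x /\ elasticity_of r x rho.

(* Main.v *)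
Require Import Defs.
From Stdlib Require Import Reals ZArith Lia Lra List Znumtheory.
Import ListNotations.
Open Scope R_scope.

Open Scope R_scope.

Fixpoint Vr (r : R) (c : list nat) : R :=
  match c with [] => 0 | a :: c' => INR a + r * Vr r c' end.

Fixpoint ex (j : nat) (c : list nat) : list nat :=
  match c with [] => [] | a :: c' => repeat j a ++ ex (S j) c' end.

Lemma fv_app r l1 l2 : fact_value r (l1 ++ l2) = fact_value r l1 + fact_value r l2.
Proof. induction l1; simpl; [ring| rewrite IHl1; ring]. Qed.

Lemma fv_repeat r j a : fact_value r (repeat j a) = INR a * r ^ j.
Proof. induction a; [simpl; ring|]. unfold fact_value in *. cbn [repeat fold_right]. rewrite IHa, S_INR. ring. Qed.

Lemma fv_ex r c : forall j, fact_value r (ex j c) = r ^ j * Vr r c.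
Proof. induction c; intro j; simpl; [ring|]. rewrite fv_app, fv_repeat, IHc. simpl. ring. Qed.

Lemma len_ex c : forall j, length (ex j c) = list_sum c.
Proof. induction c; intro j; simpl; auto. rewrite length_app, repeat_length, IHc. reflexivity. Qed.

Lemma Vr_app r c1 c2 : Vr r (c1 ++ c2) = Vr r c1 + r ^ length c1 * Vr r c2.
Proof. induction c1; simpl; [ring|]. rewrite IHc1. ring. Qed.

Lemma Vr_zeros r m : Vr r (repeat 0%nat m) = 0.
Proof. induction m; simpl; [ring|]. rewrite IHm. ring. Qed.

Definition cntj (j n : nat) (l : list nat) : list nat :=
  map (fun i => count_occ Nat.eq_dec l i) (seq j n).

Lemma cntj_S j n L : cntj j (S n) L = count_occ Nat.eq_dec L j :: cntj (S j) n L.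
Proof. reflexivity. Qed.

Lemma cntj_out k l : forall n j, ~ (j <= k < j + n)%nat -> cntj j n (k :: l) = cntj j n l.
Proof.
  intros n j H. unfold cntj. apply map_ext_in. intros i Hi. apply in_seq in Hi.
  rewrite count_occ_cons_neq; auto. lia.
Qed.

Lemma Vr_cnt_cons r k l : forall n j, (j <= k < j + n)%nat ->
  Vr r (cntj j n (k :: l)) = Vr r (cntj j n l) + r ^ (k - j).
Proof.
  induction n; intros j H; [lia|].
  rewrite !cntj_S. cbn [Vr].
  destruct (Nat.eq_dec k j) as [->|Hne].
  - rewrite count_occ_cons_eq by auto. rewrite cntj_out by lia.
    rewrite S_INR, Nat.sub_diag. simpl. ring.
  - rewrite count_occ_cons_neq by auto. rewrite IHn by lia.
    replace (k - j)%nat with (S (k - S j)) by lia. simpl. ring.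
Qed.

Lemma lsum_cons a l : list_sum (a :: l) = (a + list_sum l)%nat.
Proof. reflexivity. Qed.

Lemma sum_cnt_cons k l : forall n j, (j <= k < j + n)%nat ->
  list_sum (cntj j n (k :: l)) = S (list_sum (cntj j n l)).
Proof.
  induction n; intros j H; [lia|].
  rewrite !cntj_S, !lsum_cons.
  destruct (Nat.eq_dec k j) as [->|Hne].
  - rewrite count_occ_cons_eq by auto. rewrite cntj_out by lia. lia.
  - rewrite count_occ_cons_neq by auto. rewrite IHn by lia. lia.
Qed.

Lemma cntj_nil n : forall j, cntj j n [] = repeat 0%nat n.
Proof. induction n; intro j; simpl; auto. unfold cntj in *. simpl. f_equal. apply IHn. Qed.

Lemma Vr_cnt r l n : (forall k, In k l -> (k < n)%nat) ->
  Vr r (cntj 0 n l) = fact_value r l.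
Proof.
  induction l; intros H; simpl.
  - rewrite cntj_nil. apply Vr_zeros.
  - rewrite Vr_cnt_cons by (specialize (H a (or_introl eq_refl)); lia).
    rewrite IHl by (intros; apply H; simpl; auto). rewrite Nat.sub_0_r. ring.
Qed.

Lemma sum_cnt l n : (forall k, In k l -> (k < n)%nat) ->
  list_sum (cntj 0 n l) = length l.
Proof.
  induction l; intros H; simpl.
  - rewrite cntj_nil. clear H. induction n; simpl; auto.
  - rewrite sum_cnt_cons by (specialize (H a (or_introl eq_refl)); lia).
    rewrite IHl by (intros; apply H; simpl; auto). reflexivity.
Qed.

Lemma length_cnt j n l : length (cntj j n l) = n.
Proof. unfold cntj. rewrite length_map, length_seq. reflexivity. Qed.


Section ZS.
Open Scope Z_scope.
Variables p q : nat.
Local Notation P := (Z.of_nat p).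
Local Notation Q := (Z.of_nat q).

Fixpoint Zf (c : list nat) : Z :=
  match c with [] => 0 | a :: c' => Z.of_nat a * Q ^ Z.of_nat (length c') + P * Zf c' end.

Lemma Zf_app_last c a : Zf (c ++ [a]) = Zf c * Q + P ^ Z.of_nat (length c) * Z.of_nat a.
Proof.
  induction c as [|b c IH]; cbn [app Zf length].
  - change (Z.of_nat 0) with 0. ring.
  - rewrite IH, length_app. cbn [length]. rewrite Nat.add_1_r, !Nat2Z.inj_succ, !Z.pow_succ_r by lia. ring.
Qed.

Lemma div_pow X m : Z.gcd P Q = 1 -> (P | X * Q ^ Z.of_nat m) -> (P | X).
Proof.
  intros Hg. induction m; intros H.
  - simpl in H. rewrite Z.mul_1_r in H. exact H.
  - apply IHm. rewrite Nat2Z.inj_succ, Z.pow_succ_r in H by lia.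
    apply (Z.gauss _ Q). replace (Q * (X * Q ^ Z.of_nat m)) with (X * (Q * Q ^ Z.of_nat m)) by ring. exact H. exact Hg.
Qed.

Lemma div_pow' X m : Z.gcd Q P = 1 -> (Q | P ^ Z.of_nat m * X) -> (Q | X).
Proof.
  intros Hg. induction m; intros H.
  - change (Z.of_nat 0) with 0 in H. rewrite Z.pow_0_r, Z.mul_1_l in H. exact H.
  - apply IHm. rewrite Nat2Z.inj_succ, Z.pow_succ_r in H by lia.
    apply (Z.gauss _ P). replace (P * (P ^ Z.of_nat m * X)) with (P * P ^ Z.of_nat m * X) by ring. exact H. exact Hg.
Qed.

Hypothesis Hcop : Z.gcd P Q = 1.
Hypothesis Hqp : (q < p)%nat.

Lemma min_lemma : forall d c, length c = length d -> Forall (fun x => x < p)%nat d ->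
  Zf c = Zf d -> (list_sum d <= list_sum c)%nat.
Proof.
  induction d as [|d0 ds IH]; intros c Hl Hd Heq; simpl; [lia|].
  destruct c as [|c0 cs]; simpl in Hl; [discriminate|]. injection Hl as Hl.
  inversion Hd as [|? ? Hd0 Hds]; subst.
  simpl in Heq. rewrite Hl in Heq.
  assert (Hdv : (Z.of_nat p | Z.of_nat c0 - Z.of_nat d0)).
  { apply (div_pow _ (length ds)). exact Hcop.
    exists (Zf ds - Zf cs). lia. }
  destruct Hdv as [t Ht].
  assert (t >= 0) by nia.
  assert (Heq2 : t * Z.of_nat q ^ Z.of_nat (length ds) + Zf cs = Zf ds).
  { apply (Z.mul_reg_l _ _ (Z.of_nat p)). lia. nia. }
  destruct cs as [|c1 cs'].
  - destruct ds; simpl in Hl; [|discriminate]. simpl in Heq2. simpl.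
    assert (t = 0) by lia. subst. lia.
  - set (tn := Z.to_nat t).
    assert (IH2 := IH ((c1 + q * tn)%nat :: cs')).
    assert (list_sum ds <= list_sum ((c1 + q * tn)%nat :: cs'))%nat.
    { apply IH2; auto.
      rewrite <- Heq2. simpl. unfold tn. rewrite Nat2Z.inj_add, Nat2Z.inj_mul, Z2Nat.id by lia.
      destruct ds; simpl in Hl; [discriminate|]. simpl length. injection Hl as Hl. rewrite Hl.
      rewrite Nat2Z.inj_succ, Z.pow_succ_r by lia. ring. }
    simpl in H0 |- *. assert (Z.of_nat c0 = Z.of_nat d0 + Z.of_nat p * Z.of_nat tn) by (unfold tn; rewrite Z2Nat.id; lia).
    nia.
Qed.

Lemma max_lemma : forall n e c, length c = S n -> length e = S n ->
  Forall (fun x => x < q)%nat (tl e) ->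
  Zf c = Zf e -> (list_sum c <= list_sum e)%nat.
Proof.
  induction n; intros e c Hc He Ht Heq.
  - destruct c as [|a [|]]; try discriminate. destruct e as [|b [|]]; try discriminate.
    simpl in Heq. simpl. lia.
  - destruct (exists_last (l:=c)) as [c' [a Hca]]. intro; subst; discriminate.
    destruct (exists_last (l:=e)) as [e' [b Heb]]. intro; subst; discriminate.
    subst c e. rewrite length_app in Hc, He. simpl in Hc, He.
    assert (Hlc : length c' = S n) by lia. assert (Hle : length e' = S n) by lia.
    rewrite !Zf_app_last, Hlc, Hle in Heq.
    assert (Hb : (b < q)%nat).
    { destruct e' as [|e0 e'']; [discriminate|]. simpl in Ht. rewrite Forall_app in Ht.
      destruct Ht as [_ Ht]. inversion Ht; auto. }
    assert (Htl : Forall (fun x => x < q)%nat (tl e')).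
    { destruct e' as [|e0 e'']; [discriminate|]. simpl in Ht |- *. rewrite Forall_app in Ht. tauto. }
    assert (Hdv : (Q | Z.of_nat a - Z.of_nat b)).
    { apply (div_pow' _ (S n)). rewrite Z.gcd_comm. exact Hcop.
      exists (Zf e' - Zf c'). lia. }
    destruct Hdv as [t Ht0].
    assert (t >= 0) by nia.
    assert (Heq2 : Zf c' + P ^ Z.of_nat (S n) * t = Zf e').
    { apply (Z.mul_reg_r _ _ Q). lia. nia. }
    destruct (exists_last (l:=c')) as [c'' [z Hcz]]. intro; subst; discriminate.
    subst c'. rewrite length_app in Hlc. simpl in Hlc.
    set (tn := Z.to_nat t).
    assert (list_sum (c'' ++ [(z + p * tn)%nat]) <= list_sum e')%nat.
    { apply (IHn e'); auto. rewrite length_app. simpl. lia.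
      rewrite <- Heq2, !Zf_app_last. unfold tn.
      rewrite Nat2Z.inj_add, Nat2Z.inj_mul, Z2Nat.id by lia.
      replace (length c'') with n by lia. rewrite Nat2Z.inj_succ, Z.pow_succ_r by lia. subst. ring. }
    rewrite !list_sum_app in *. simpl in *.
    assert (Z.of_nat a = Z.of_nat b + Z.of_nat q * Z.of_nat tn) by (unfold tn; rewrite Z2Nat.id; lia).
    nia.
Qed.

End ZS.

Open Scope R_scope.

Section Main.
Variables p q : nat.
Variable r : R.
Hypothesis Hrq : r * INR q = INR p.
Hypothesis Hq2 : (2 <= q)%nat.
Hypothesis Hqp : (q < p)%nat.
Hypothesis Hcop : Z.gcd (Z.of_nat p) (Z.of_nat q) = 1%Z.

Lemma qpos : 0 < INR q.
Proof. apply lt_0_INR. lia. Qed.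

Lemma rpos : 1 < r.
Proof.
  assert (INR q < INR p) by (apply lt_INR; lia). pose proof qpos. nra.
Qed.

Fixpoint md (f N : nat) : list nat :=
  match f with
  | O => [N]
  | S f' => if (N <? p)%nat then [N] else (N mod p)%nat :: md f' (q * (N / p))
  end.

Lemma md_val f : forall N, Vr r (md f N) = INR N.
Proof.
  induction f; intro N; simpl; [ring|].
  destruct (N <? p)%nat; simpl; [ring|]. rewrite IHf.
  assert (Hd := Nat.div_mod N p ltac:(lia)).
  rewrite mult_INR. rewrite Hd at 3. rewrite plus_INR, mult_INR, <- Hrq. ring.
Qed.

Lemma md_dig f : forall N, (N <= f)%nat -> Forall (fun x => x < p)%nat (md f N).
Proof.
  induction f; intros N HN; simpl.
  - constructor; [lia | constructor].
  - destruct (N <? p)%nat eqn:E.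
    + apply Nat.ltb_lt in E. constructor; [lia|constructor].
    + apply Nat.ltb_ge in E. constructor. apply Nat.mod_upper_bound; lia.
      apply IHf.
      assert (p * (N / p) <= N)%nat by (apply Nat.Div0.mul_div_le; lia).
      assert (1 <= N / p)%nat by (apply Nat.div_le_lower_bound; lia).
      nia.
Qed.

Lemma md_len j : forall f N, INR N < INR p * r ^ j -> (length (md f N) <= S j)%nat.
Proof.
  induction j; intros f N H; destruct f; simpl; try lia.
  - destruct (N <? p)%nat eqn:E; simpl; [lia|]. apply Nat.ltb_ge in E.
    apply le_INR in E. simpl in H. lra.
  - destruct (N <? p)%nat eqn:E; simpl; [lia|]. apply le_n_S. apply IHj.
    assert (p * (N / p) <= N)%nat by (apply Nat.Div0.mul_div_le; lia).
    apply le_INR in H0. rewrite mult_INR in *. simpl in H.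
    pose proof qpos. pose proof rpos.
    assert (INR q * INR (N / p) * r <= INR N) by (rewrite <- Hrq in H0; nra).
    assert (0 < r ^ j) by (apply pow_lt; lra).
    assert (0 < INR p) by (apply lt_0_INR; lia).
    nra.
Qed.

Lemma md_ne f N : (1 <= length (md f N))%nat.
Proof. destruct f; simpl; [lia|]. destruct (N <? p)%nat; simpl; lia. Qed.

Lemma Zf_R c : IZR (Zf p q c) * INR q = Vr r c * INR q ^ length c.
Proof.
  induction c as [|a c IH]; cbn [Zf Vr length]; [simpl; ring|].
  rewrite plus_IZR, !mult_IZR, <- pow_IZR, <- !INR_IZR_INZ.
  rewrite <- Hrq.
  transitivity (INR a * INR q ^ length c * INR q + r * INR q * (IZR (Zf p q c) * INR q)); [ring|].
  rewrite IH. simpl. ring.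
Qed.


Definition dd N G := md N N ++ repeat 1%nat G.
Definition ee N G := (N :: repeat 0%nat (length (md N N) - 1)) ++ repeat 1%nat G.

Lemma sum_repeat a k : list_sum (repeat a k) = (a * k)%nat.
Proof. induction k; [simpl; lia|]. cbn [repeat]. rewrite lsum_cons, IHk. lia. Qed.

Lemma Forall_repeat (P : nat -> Prop) a k : P a -> Forall P (repeat a k).
Proof. intro H. apply Forall_forall. intros x Hx. apply repeat_spec in Hx. subst. exact H. Qed.

Lemma ee_val N G : Vr r (ee N G) = Vr r (dd N G).
Proof.
  unfold ee, dd. rewrite !Vr_app. cbn [length Vr]. rewrite repeat_length, Vr_zeros, md_val.
  pose proof (md_ne N N). replace (S (length (md N N) - 1)) with (length (md N N)) by lia. ring.
Qed.

Lemma len_ee N G : length (ee N G) = length (dd N G).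
Proof. unfold ee, dd. rewrite !length_app. cbn [length]. rewrite !repeat_length. pose proof (md_ne N N). lia. Qed.

Lemma sum_dd N G : list_sum (dd N G) = (list_sum (md N N) + G)%nat.
Proof. unfold dd. rewrite list_sum_app, sum_repeat. lia. Qed.

Lemma sum_ee N G : list_sum (ee N G) = (N + G)%nat.
Proof. unfold ee. rewrite list_sum_app, lsum_cons, !sum_repeat. lia. Qed.

Lemma Zf_eq c1 c2 : length c1 = length c2 -> Vr r c1 = Vr r c2 -> Zf p q c1 = Zf p q c2.
Proof.
  intros Hl Hv. apply eq_IZR. apply (Rmult_eq_reg_r (INR q)); [|pose proof qpos; lra].
  rewrite !Zf_R, Hl, Hv. reflexivity.
Qed.

Lemma bounds N G l : fact_value r l = Vr r (dd N G) ->
  (list_sum (md N N) + G <= length l <= N + G)%nat.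
Proof.
  intro Hl.
  set (n := (S (list_max l) + length (dd N G))%nat).
  assert (Hk : forall k, In k l -> (k < n)%nat).
  { intros k Hk. assert (list_max l <= list_max l)%nat as H0 by lia.
    apply list_max_le in H0. rewrite Forall_forall in H0. specialize (H0 k Hk). unfold n. lia. }
  set (c := cntj 0 n l).
  assert (Hcv : Vr r c = fact_value r l) by (apply Vr_cnt; auto).
  assert (Hcs : list_sum c = length l) by (apply sum_cnt; auto).
  assert (Hcl : length c = n) by apply length_cnt.
  set (k := (n - length (dd N G))%nat).
  set (d' := dd N G ++ repeat 0%nat k).
  set (e' := ee N G ++ repeat 0%nat k).
  assert (Hd'l : length d' = n) by (unfold d', k; rewrite length_app, repeat_length; unfold n; lia).
  assert (He'l : length e' = n) by (unfold e', k; rewrite length_app, repeat_length, len_ee; unfold n; lia).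
  assert (Hd'v : Vr r d' = Vr r (dd N G)) by (unfold d'; rewrite Vr_app, Vr_zeros; ring).
  assert (He'v : Vr r e' = Vr r (dd N G)) by (unfold e'; rewrite Vr_app, Vr_zeros, ee_val; ring).
  assert (Hd's : list_sum d' = list_sum (dd N G)) by (unfold d'; rewrite list_sum_app, sum_repeat; lia).
  assert (He's : list_sum e' = list_sum (ee N G)) by (unfold e'; rewrite list_sum_app, sum_repeat; lia).
  rewrite sum_dd in Hd's. rewrite sum_ee in He's.
  split.
  - rewrite <- Hd's, <- Hcs. eapply min_lemma; eauto.
    + congruence.
    + unfold d', dd. apply Forall_app; split; [apply Forall_app; split|].
      * apply md_dig; lia.
      * apply Forall_repeat; lia.
      * apply Forall_repeat; lia.
    + apply Zf_eq; congruence.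
  - rewrite <- He's, <- Hcs. apply (max_lemma p q Hcop Hqp (pred n)).
    + unfold n in *; lia.
    + unfold n in *; lia.
    + unfold e', ee. cbn [app tl]. apply Forall_app; split; [apply Forall_app; split|].
      * apply Forall_repeat; lia.
      * apply Forall_repeat; lia.
      * apply Forall_repeat; lia.
    + apply Zf_eq; congruence.
Qed.

End Main.

Open Scope R_scope.

Lemma Vr_nonneg r c : 0 <= r -> 0 <= Vr r c.
Proof. intro H. induction c; simpl; [lra|]. pose proof (pos_INR a). nra. Qed.

Lemma sum_le_len p l : Forall (fun x => x < p)%nat l -> (list_sum l <= p * length l)%nat.
Proof. induction 1; [simpl; lia|]. rewrite lsum_cons. cbn [length]. lia. Qed.

Lemma floor_nat z : 0 <= z -> exists n : nat, INR n <= z < INR n + 1.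
Proof.
  intro Hz. destruct (archimed z) as [H1 H2].
  assert (0 < up z)%Z by (apply lt_0_IZR; lra).
  exists (Z.to_nat (up z - 1)). rewrite INR_IZR_INZ, Z2Nat.id by lia.
  rewrite minus_IZR. simpl. lra.
Qed.

Section Main2.
Variables p q : nat.
Variable r : R.
Hypothesis Hrq : r * INR q = INR p.
Hypothesis Hq2 : (2 <= q)%nat.
Hypothesis Hqp : (q < p)%nat.
Hypothesis Hcop : Z.gcd (Z.of_nat p) (Z.of_nat q) = 1%Z.

Lemma elast N G : (1 <= G)%nat ->
  elasticity_set r (INR (N + G) / INR (list_sum (md p q N N) + G)).
Proof.
  intro HG. pose proof (rpos p q r Hrq Hq2 Hqp) as Hr.
  exists (Vr r (dd p q N G)). split.
  { exists (ex 0 (dd p q N G)). rewrite fv_ex. simpl. ring. }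
  right. split.
  { unfold dd. rewrite Vr_app.
    assert (0 <= Vr r (md p q N N)) by (apply Vr_nonneg; lra).
    assert (1 <= Vr r (repeat 1%nat G)).
    { destruct G; [lia|]. cbn [repeat Vr]. assert (0 <= Vr r (repeat 1%nat G)) by (apply Vr_nonneg; lra).
      simpl INR. nra. }
    assert (0 < r ^ length (md p q N N)) by (apply pow_lt; lra). nra. }
  exists (INR (N + G)), (INR (list_sum (md p q N N) + G)).
  split; [|split; [|reflexivity]].
  - split.
    + intros t [l [Hl ->]]. apply le_INR. eapply bounds; eauto.
    + intros b Hb. apply Hb. exists (ex 0 (ee p q N G)). split.
      * rewrite fv_ex, ee_val. simpl. ring. all: assumption.
      * rewrite len_ex, sum_ee. reflexivity. all: assumption.
  - split.
    + intros t [l [Hl ->]]. apply le_INR. eapply bounds; eauto.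
    + intros b Hb. apply Hb. exists (ex 0 (dd p q N G)). split.
      * rewrite fv_ex. simpl. ring.
      * rewrite len_ex, sum_dd. reflexivity. all: assumption.
Qed.

Lemma bern k : 1 + INR k * (r - 1) <= r ^ k.
Proof.
  pose proof (rpos p q r Hrq Hq2 Hqp) as Hr.
  induction k; [simpl; lra|]. rewrite S_INR. cbn [pow]. pose proof (pos_INR k).
  assert (r * (1 + INR k * (r - 1)) <= r * r ^ k) by (apply Rmult_le_compat_l; lra).
  assert (0 <= INR k * ((r - 1) * (r - 1))) by (apply Rmult_le_pos; nra). nra.
Qed.

Lemma growth A : exists j : nat, A * (INR j + 1) < r ^ j.
Proof.
  pose proof (rpos p q r Hrq Hq2 Hqp) as Hr.
  set (a := r - 1).
  assert (Ha : 0 < a) by (unfold a; lra).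
  destruct (floor_nat (3 * Rabs A / (a * a))) as [n [Hn1 Hn2]].
  { apply Rmult_le_pos. pose proof (Rabs_pos A). lra. apply Rlt_le, Rinv_0_lt_compat. nra. }
  exists (2 * S n)%nat.
  assert (Hk : 3 * Rabs A < INR (S n) * (a * a)).
  { rewrite S_INR. assert (E : 3 * Rabs A / (a * a) * (a * a) = 3 * Rabs A) by (field; lra).
    assert (0 < a * a) by nra.
    rewrite <- E. apply Rmult_lt_compat_r; lra. }
  pose proof (bern (S n)) as Hb. fold a in Hb.
  replace (r ^ (2 * S n)) with (r ^ S n * r ^ S n) by (rewrite <- pow_add; f_equal; lia).
  rewrite mult_INR. replace (INR 2) with 2 by (simpl; ring).
  set (k := INR (S n)) in *.
  assert (1 <= k) by (unfold k; rewrite S_INR; pose proof (pos_INR n); lra).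
  assert (A <= Rabs A) by apply Rle_abs.
  assert (0 <= Rabs A) by apply Rabs_pos.
  assert (k * a < r ^ S n) by lra.
  assert (0 <= k * a) by nra.
  assert ((k * a) * (k * a) < r ^ S n * r ^ S n) by nra.
  assert (A * (2 * k + 1) <= Rabs A * (3 * k)) by nra.
  assert (Rabs A * (3 * k) * 1 <= k * a * a * k) by nra.
  nra.
Qed.

End Main2.

Open Scope R_scope.

Theorem proposition4p5 (r : R)
  (hrat : exists p q : nat, (0 < q)%nat /\ r = INR p / INR q)
  (hr1 : 1 < r) (hnat : forall n : nat, r <> INR n) :
  forall y eps : R, 1 <= y -> 0 < eps ->
    exists rho : R, elasticity_set r rho /\ Rabs (rho - y) < eps.
Proof.
  intros y eps Hy He.
  destruct hrat as [p0 [q0 [Hq0 Hr]]].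
  set (P0 := Z.of_nat p0). set (Q0 := Z.of_nat q0). set (g := Z.gcd P0 Q0).
  assert (Hg0 : g <> 0%Z).
  { unfold g. rewrite Z.gcd_eq_0. unfold Q0. lia. }
  assert (Hgp : (0 < g)%Z) by (pose proof (Z.gcd_nonneg P0 Q0); unfold g in *; lia).
  destruct (Z.gcd_divide_l P0 Q0) as [a Ha]. destruct (Z.gcd_divide_r P0 Q0) as [b Hb].
  fold g in Ha, Hb.
  assert (Hab : Z.gcd a b = 1%Z).
  { replace a with (P0 / g)%Z by (rewrite Ha; apply Z.div_mul; exact Hg0).
    replace b with (Q0 / g)%Z by (rewrite Hb; apply Z.div_mul; exact Hg0).
    apply Z.gcd_div_gcd; auto. }
  assert (Ha0 : (0 <= a)%Z) by (unfold P0 in Ha; nia).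
  assert (Hb0 : (0 < b)%Z) by (unfold Q0 in Hb; nia).
  set (p := Z.to_nat a). set (q := Z.to_nat b).
  assert (Hpa : Z.of_nat p = a) by (unfold p; apply Z2Nat.id; lia).
  assert (Hqb : Z.of_nat q = b) by (unfold q; apply Z2Nat.id; lia).
  assert (Hrq : r * INR q = INR p).
  { rewrite Hr, !INR_IZR_INZ. fold P0 Q0. rewrite Ha, Hb, Hpa, Hqb, !mult_IZR.
    assert (IZR g <> 0) by (apply not_0_IZR; exact Hg0).
    assert (IZR b <> 0) by (apply not_0_IZR; lia).
    field. split; auto. }
  assert (Hq1 : (1 <= q)%nat) by lia.
  assert (Hq2 : (2 <= q)%nat).
  { destruct (Nat.eq_dec q 1) as [E|E]; [|lia]. exfalso. apply (hnat p).
    rewrite <- Hrq, E. simpl. ring. }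
  assert (Hqp : (q < p)%nat).
  { apply INR_lt. rewrite <- Hrq. assert (0 < INR q) by (apply lt_0_INR; lia). nra. }
  assert (Hcop : Z.gcd (Z.of_nat p) (Z.of_nat q) = 1%Z) by (rewrite Hpa, Hqb; exact Hab).
  clearbody p q. clear Ha Hb Hpa Hqb Hab Hr.
  assert (Hp0 : 0 < INR p) by (apply lt_0_INR; lia).
  set (A := y * (y * INR p + 1 + eps) / (eps * INR p)).
  destruct (growth p q r Hrq Hq2 Hqp A) as [j Hj].
  set (K := (y * INR p * (INR j + 1) + 1) / eps).
  assert (HK : K * eps = y * INR p * (INR j + 1) + 1) by (unfold K; field; lra).
  assert (HA : A * INR p * eps = y * (y * INR p + 1 + eps)) by (unfold A; field; lra).
  assert (Hj0 : 0 <= INR j) by apply pos_INR.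
  assert (HK0 : 0 <= K).
  { apply (Rmult_le_reg_r eps); auto. rewrite HK.
    assert (0 <= y * INR p * (INR j + 1)) by (repeat apply Rmult_le_pos; lra). lra. }
  destruct (floor_nat K HK0) as [n0 [Hn1 Hn2]].
  set (G := S n0).
  assert (HG : INR G = INR n0 + 1) by (unfold G; apply S_INR).
  destruct (floor_nat ((y - 1) * INR G)) as [N [HN1 HN2]].
  { apply Rmult_le_pos; [lra|]. rewrite HG. pose proof (pos_INR n0). lra. }
  assert (HNr : INR N < INR p * r ^ j).
  { assert (y * (K + 1) <= A * (INR j + 1) * INR p).
    { apply (Rmult_le_reg_r eps); auto.
      replace (y * (K + 1) * eps) with (y * (K * eps) + y * eps) by ring.
      replace (A * (INR j + 1) * INR p * eps) with ((A * INR p * eps) * (INR j + 1)) by ring.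
      rewrite HK, HA.
      assert (0 <= y * (1 + eps) * INR j) by (repeat apply Rmult_le_pos; lra). nra. }
    nra. }
  pose proof (md_len p q r Hrq Hq2 Hqp j N N HNr) as Hlen.
  assert (Hdig : Forall (fun x => x < p)%nat (md p q N N)) by (eapply md_dig; eauto).
  pose proof (sum_le_len p _ Hdig) as Hsum.
  set (Bn := list_sum (md p q N N)) in *.
  assert (HB : INR Bn <= INR p * (INR j + 1)).
  { rewrite <- S_INR, <- mult_INR. apply le_INR. nia. }
  exists (INR (N + G) / INR (Bn + G)). split.
  { apply elast; auto. unfold G; lia. }
  rewrite !plus_INR.
  assert (HB0 : 0 <= INR Bn) by apply pos_INR.
  assert (HD : 0 < INR Bn + INR G) by (rewrite HG; pose proof (pos_INR n0); lra).
  set (rho := (INR N + INR G) / (INR Bn + INR G)).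
  assert (Hrho : rho * (INR Bn + INR G) = INR N + INR G) by (unfold rho; field; lra).
  assert (H1 : rho <= y).
  { apply (Rmult_le_reg_r (INR Bn + INR G)); auto. rewrite Hrho. nra. }
  assert (H2 : y - rho < eps).
  { apply (Rmult_lt_reg_r (INR Bn + INR G)); auto.
    replace ((y - rho) * (INR Bn + INR G)) with (y * (INR Bn + INR G) - rho * (INR Bn + INR G)) by ring.
    rewrite Hrho.
    assert (y * INR Bn <= y * (INR p * (INR j + 1))) by (apply Rmult_le_compat_l; lra).
    assert (K * eps < INR G * eps) by (apply Rmult_lt_compat_r; lra).
    nra. }
  unfold Rabs. destruct (Rcase_abs (rho - y)); lra.
Qed.
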